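(* Let $X$ be a real reflexive Banach space such that both $X$ and $X^*$ are locally uniformly convex, let $A:X\supset D(A)\to 2^{X^*}$ be a maximal monotone operator, and let $\varphi$ be an arbitrary gauge function. Then the mappings $(\lambda,x)\mapsto A^\varphi_\lambda x$ from $(0,\infty)\times X$ to $X^*$ and $(\lambda,x)\mapsto J^\varphi_\lambda x$ from $(0,\infty)\times X$ to $X$ are continuous (with respect to the norm topologies).
   Context: A gauge function is a strictly increasing continuous $\varphi:[0,\infty)\to[0,\infty)$ with $\varphi(0)=0$, $\varphi(r)\to\infty$ as $r\to\infty$; $J_\varphi:X\to X^*$ is the duality mapping $J_\varphi x$ = the unique $x^*\in X^*$ with $\langle x^*,x\rangle=\varphi(\|x\|)\|x\|$, $\|x^*\|=\varphi(\|x\|)$ (single-valued here, and a bijection of $X$ onto $X^*$ whose inverse is the duality mapping of $X^*$ with gauge $\varphi^{-1}$). A space is locally uniformly convex if for every $x_0$ with $\|x_0\|=1$ and $\varepsilon\in(0,2]$ there is $\delta>0$ such that $\|x\|=1$, $\|x-x_0\|\ge\varepsilon$ imply $\|x+x_0\|\le2(1-\delta)$. $A$ is maximal monotone: $\langle u-v,x-y\rangle\ge0$ for $u\in Ax$, $v\in Ay$, and its graph is maximal among graphs of monotone operators. For $\lambda>0$ and $x\in X$, the inclusion $0\in J_\varphi(x_\lambda-x)+\lambda A x_\lambda$ has a unique solution $x_\lambda\in D(A)$; the generalized resolvent and Yosida approximant are defined by $J^\varphi_\lambda x:=x_\lambda$ and $A^\varphi_\lambda x:=\frac1\lambda J_\varphi(x-J^\varphi_\lambda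 x)$. Thus $A^\varphi_\lambda x\in A(J^\varphi_\lambda x)$ and $x=J^\varphi_\lambda x+J_\varphi^{-1}(\lambda A^\varphi_\lambda x)$. *)

(* Defs.v *)
From HB Require Import structures.
From mathcomp Require Import all_boot all_order all_algebra.
From mathcomp Require Import all_classical all_reals all_analysis.
Set Implicit Arguments. Unset Strict Implicit. Unset Printing Implicit Defensive.
Import Order.TTheory GRing.Theory Num.Theory.
Import numFieldNormedType.Exports.
Local Open Scope classical_set_scope.
Local Open Scope ring_scope.

Section Defs.
Context {R : realType} {X : normedModType R}.

Definition dual_elem (f : X -> R) : Prop :=
  (forall (a : R) (x y : X), f (a *: x + y) = a * f x + f y) /\ continuous f.

Definition dnorm (f : X -> R) : R :=
  sup [set `|f x| | x in [set x : X | `|x| <= 1]].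

Definition reflexive_space : Prop :=
  forall Phi : (X -> R) -> R,
    (forall (a : R) (f g : X -> R), dual_elem f -> dual_elem g ->
        Phi (fun y => a * f y + g y) = a * Phi f + Phi g) ->
    (exists M : R, forall f, dual_elem f -> `|Phi f| <= M * dnorm f) ->
    exists x : X, forall f, dual_elem f -> Phi f = f x.

Definition loc_unif_convex : Prop :=
  forall x0 : X, `|x0| = 1 -> forall eps : R, 0 < eps <= 2 ->
    exists2 delta : R, 0 < delta &
      forall x : X, `|x| = 1 -> eps <= `|x - x0| -> `|x + x0| <= 2 * (1 - delta).

Definition dual_loc_unif_convex : Prop :=
  forall f0 : X -> R, dual_elem f0 -> dnorm f0 = 1 -> forall eps : R, 0 < eps <= 2 ->
    exists2 delta : R, 0 < delta &
      forall f : X -> R, dual_elem f -> dnorm f = 1 ->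
        eps <= dnorm (fun y => f y - f0 y) ->
        dnorm (fun y => f y + f0 y) <= 2 * (1 - delta).

Definition gauge (phi : R -> R) : Prop :=
  phi 0 = 0 /\
  (forall r s : R, 0 <= r -> r < s -> phi r < phi s) /\
  {within [set r : R | 0 <= r], continuous phi} /\
  (forall M : R, exists N : R, forall r, N <= r -> M <= phi r).

Definition monotone_op (A : X -> set (X -> R)) : Prop :=
  (forall x u, A x u -> dual_elem u) /\
  (forall x y u v, A x u -> A y v -> 0 <= u (x - y) - v (x - y)).

Definition maximal_monotone (A : X -> set (X -> R)) : Prop :=
  monotone_op A /\
  forall B : X -> set (X -> R), monotone_op B ->
    (forall x u, A x u -> B x u) -> (forall x u, B x u -> A x u).

Definition domain (A : X -> set (X -> R)) : set X := [set x | exists u, A x u].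

Definition duality_value (phi : R -> R) (x : X) (xs : X -> R) : Prop :=
  dual_elem xs /\ xs x = phi `|x| * `|x| /\ dnorm xs = phi `|x|.

Definition yosida (J : X -> (X -> R)) (Jres : R -> X -> X) (l : R) (x : X) : X -> R :=
  fun y => l^-1 * J (x - Jres l x) y.

End Defs.

(* Main.v *)
Require Import Defs.
From HB Require Import structures.
From mathcomp Require Import all_boot all_order all_algebra.
From mathcomp Require Import all_classical all_reals all_analysis.
From mathcomp Require Import ring lra.
Import Order.TTheory GRing.Theory Num.Theory.
Import numFieldNormedType.Exports.
Local Open Scope classical_set_scope.
Local Open Scope ring_scope.
Set Implicit Arguments. Unset Strict Implicit.

Section Dual.
Context {R : realType} {X : normedModType R}.
Implicit Types (f g : X -> R) (x y : X).

Lemma dual0 f : dual_elem f -> f 0 = 0.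
Proof.
case=> lin _; have := lin 1 0 0; rewrite scale1r addr0 mul1r => h; lra.
Qed.

Lemma dualZ f a x : dual_elem f -> f (a *: x) = a * f x.
Proof. move=> hf; have := hf.1 a x 0; rewrite addr0 dual0 // addr0. by []. Qed.

Lemma dualD f x y : dual_elem f -> f (x + y) = f x + f y.
Proof. by move=> hf; have := hf.1 1 x y; rewrite scale1r mul1r. Qed.

Lemma dualN f x : dual_elem f -> f (- x) = - f x.
Proof. by move=> hf; rewrite -scaleN1r dualZ // mulN1r. Qed.

Lemma dualB f x y : dual_elem f -> f (x - y) = f x - f y.
Proof. by move=> hf; rewrite dualD // dualN. Qed.

Lemma dual_bounded f : dual_elem f -> exists2 M, 0 < M & forall x, `|f x| <= M * `|x|.
Proof.
move=> hf; have := @cvgr_dist_lt _ _ _ _ _ f (f 0) (hf.2 0) 1 ltr01.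
rewrite dual0 //.
move=> h0; have [d /= d0 H] := (nbhs_ballP _ _).1 (h0 _).
exists (2 / d); first by rewrite divr_gt0.
move=> x; have [->|x0] := eqVneq x 0; first by rewrite dual0 // normr0 normr0 mulr0.
have nx : 0 < `|x| by rewrite normr_gt0.
set c := d / (2 * `|x|).
have c0 : 0 < c by rewrite /c divr_gt0 // mulr_gt0.
have : ball (0:X) d (c *: x).
  rewrite -ball_normE /ball_ /= sub0r normrN normrZ gtr0_norm //.
  have -> : c * `|x| = d / 2 by rewrite /c; field; rewrite gt_eqF.
  lra.
move/H; rewrite sub0r normrN dualZ // normrM gtr0_norm // => hc.
rewrite -(ler_pM2l c0) mulrA.
suff -> : c * (2 / d) * `|x| = 1 by exact: ltW.
rewrite /c. field. by apply/andP; split; rewrite gt_eqF.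
Qed.

Lemma dnorm_has_ub f : dual_elem f ->
  has_ubound [set `|f x| | x in [set x : X | `|x| <= 1]].
Proof.
move=> hf; have [M M0 HM] := dual_bounded hf.
exists M => _ [x /= hx <-]; apply: (le_trans (HM x)).
by rewrite -[leRHS]mulr1 ler_wpM2l // ltW.
Qed.

Lemma dnorm_ge0 f : dual_elem f -> 0 <= dnorm f.
Proof.
move=> hf.
have h : [set `|f x| | x in [set x : X | `|x| <= 1]] `|f 0|.
  by exists 0; rewrite /= ?normr0 ?ler01.
by have := ub_le_sup (dnorm_has_ub hf) h; rewrite dual0 // normr0.
Qed.

Lemma dnorm_ub f x : dual_elem f -> `|f x| <= dnorm f * `|x|.
Proof.
move=> hf; have [->|x0] := eqVneq x 0; first by rewrite dual0 // !normr0 mulr0.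
have nx : 0 < `|x| by rewrite normr_gt0.
have : `|f (`|x|^-1 *: x)| <= dnorm f.
  apply: (ub_le_sup (dnorm_has_ub hf)); exists (`|x|^-1 *: x) => //=.
  by rewrite normrZ normfV normr_id mulVf ?gt_eqF.
rewrite dualZ // normrM normfV normr_id => h.
by rewrite -ler_pdivrMr // mulrC.
Qed.

Lemma dnorm_le f M : dual_elem f -> 0 <= M -> (forall x, `|f x| <= M * `|x|) -> dnorm f <= M.
Proof.
move=> hf M0 HM; apply: ge_sup.
  by exists 0, 0; rewrite /= ?normr0 ?ler01 // dual0 // normr0.
move=> _ [x /= hx <-]; apply: (le_trans (HM x)).
by rewrite -[leRHS]mulr1 ler_wpM2l.
Qed.

Lemma dual_scale a f : dual_elem f -> dual_elem (fun y => a * f y).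
Proof.
move=> hf; split.
  by move=> c x y; rewrite hf.1 mulrDr !mulrA [a * c]mulrC.
by move=> x; apply: cvgM; [exact: cvg_cst | exact: hf.2].
Qed.

Lemma dual_add f g : dual_elem f -> dual_elem g -> dual_elem (fun y => f y + g y).
Proof.
move=> hf hg; split.
  by move=> c x y; rewrite hf.1 hg.1; ring.
by move=> x; apply: cvgD; [exact: hf.2 | exact: hg.2].
Qed.

Lemma dual_sub f g : dual_elem f -> dual_elem g -> dual_elem (fun y => f y - g y).
Proof.
move=> hf hg; split.
  by move=> c x y; rewrite hf.1 hg.1; ring.
by move=> x; apply: cvgB; [exact: hf.2 | exact: hg.2].
Qed.

End Dual.

Section Phi.
Context {R : realType} (phi : R -> R) (hg : gauge phi).

Lemma phi_lt r s : 0 <= r -> r < s -> phi r < phi s.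
Proof. exact: hg.2.1. Qed.

Lemma phi_le r s : 0 <= r -> r <= s -> phi r <= phi s.
Proof.
move=> r0; rewrite le_eqVlt => /orP[/eqP->//|rs].
exact/ltW/phi_lt.
Qed.

Lemma phi_ge0 r : 0 <= r -> 0 <= phi r.
Proof. by move=> r0; rewrite -hg.1; apply: phi_le. Qed.

Lemma phi_gt0 r : 0 < r -> 0 < phi r.
Proof. by move=> r0; rewrite -hg.1; apply: phi_lt. Qed.

Lemma phi_cont b e : 0 <= b -> 0 < e -> exists2 d, 0<d &
  forall r, 0 <= r -> `|r - b| < d -> `|phi r - phi b| < e.
Proof.
move: hg => [_ [_ [hc _]]] b0 e0.
have h := hc b.
have h0 := @cvgr_dist_lt _ _ _ _ _ phi (phi b) h e e0.
have h2 : nbhs (b : subspace [set r : R | 0 <= r]) [set t | `|phi b - phi t| < e].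
  by apply: h0; exact: subspace_filter.
have [V hV eqV] := (nbhs_subspace_ex _ (b0 : [set r : R | 0 <= r] b)).1 h2.
have [d /= d0 H] := (nbhs_ballP _ _).1 hV.
exists d => // r r0 hr.
have : ball b d r by rewrite -ball_normE /= distrC.
move/H => Vr.
have : ([set t | `|phi b - phi t| < e] `&` [set r : R | 0 <= r]) r by rewrite eqV.
by case; rewrite /= distrC.
Qed.

End Phi.

Section JLem.
Context {R : realType} {X : normedModType R} (phi : R -> R) (J : X -> X -> R).
Hypothesis hg : gauge phi.
Hypothesis hJ : forall x : X, duality_value phi x (J x).

Lemma Jdual x : dual_elem (J x). Proof. exact: (hJ x).1. Qed.
Lemma Jxx x : J x x = phi `|x| * `|x|. Proof. exact: (hJ x).2.1. Qed.
Lemma Jdn x : dnorm (J x) = phi `|x|. Proof. exact: (hJ x).2.2. Qed.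
Lemma Jbound x y : `|J x y| <= phi `|x| * `|y|.
Proof. by rewrite -Jdn; apply: dnorm_ub; apply: Jdual. Qed.

End JLem.

Section JCont.
Context {R : realType} {X : normedModType R} (phi : R -> R) (J : X -> X -> R).
Hypothesis hg : gauge phi.
Hypothesis hJ : forall x : X, duality_value phi x (J x).

Lemma dnorm_normalize x : x != 0 ->
  dnorm (fun y => (phi `|x|)^-1 * J x y) = 1.
Proof.
move=> x0; have nx : 0 < `|x| by rewrite normr_gt0.
have px : 0 < phi `|x| by apply: (phi_gt0 hg).
have hd : dual_elem (fun y => (phi `|x|)^-1 * J x y) by apply/dual_scale/(Jdual hJ).
apply/eqP; rewrite eq_le; apply/andP; split.
  apply: dnorm_le => // y; rewrite normrM gtr0_norm ?invr_gt0 //.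
  rewrite ler_pdivrMl // mul1r; exact: (Jbound hJ).
have := dnorm_ub x hd; rewrite (Jxx hJ) mulrA mulVf ?gt_eqF // mul1r ger0_norm //.
by rewrite -{1}[`|x|]mul1r ler_pM2r.
Qed.

Lemma Jcont (hd : dual_loc_unif_convex (R:=R) (X:=X)) d e : 0 < e ->
  exists2 del, 0 < del & forall c, `|c - d| < del -> dnorm (fun y => J c y - J d y) < e.
Proof.
move=> e0.
have [->|d0] := eqVneq d 0.
  have J0 : forall y, J 0 y = 0.
    move=> y; apply/eqP; rewrite -normr_le0; apply: le_trans (Jbound hJ 0 y) _.
    by rewrite normr0 hg.1 mul0r.
  have [del del0 Hd] := phi_cont hg (lexx 0) e0.
  exists del => // c; rewrite subr0 => hc.
  apply: le_lt_trans (_ : phi `|c| < e).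
    apply: dnorm_le; first by apply: dual_sub; apply: (Jdual hJ).
      exact: (phi_ge0 hg).
    by move=> y; rewrite J0 subr0; apply: (Jbound hJ).
  have := Hd `|c| (normr_ge0 _); rewrite subr0 normr_id hg.1 subr0 => /(_ hc).
  by rewrite ger0_norm //; apply: (phi_ge0 hg).
set b := `|d|; have b0 : 0 < b by rewrite normr_gt0.
set pd := phi b; have pd0 : 0 < pd by apply: (phi_gt0 hg).
set f0 := fun y => pd^-1 * J d y.
have f0d : dual_elem f0 by apply/dual_scale/(Jdual hJ).
have f0n : dnorm f0 = 1 by apply: dnorm_normalize.
have f0dd : f0 d = b by rewrite /f0 (Jxx hJ) mulrA mulVf ?gt_eqF ?mul1r.
set eps0 := Num.min (e / (4 * pd)) 2.
have eps00 : 0 < eps0 by rewrite lt_min divr_gt0 ?mulr_gt0 //=.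
have eps02 : eps0 <= 2 by rewrite ge_min lexx orbT.
have eps0e : eps0 <= e / (4 * pd) by rewrite ge_min lexx.
have [del' del'0 Hl] := hd f0 f0d f0n eps0 (introT andP (conj eps00 eps02)).
have t0 : 0 < Num.min (e / 2) pd by rewrite lt_min pd0 divr_gt0.
have [dp dp0 Hp] := phi_cont hg (ltW b0) t0.
exists (Num.min (Num.min (del' * b) b) dp).
  by rewrite !lt_min mulr_gt0 ?b0 ?dp0.
move=> c; rewrite !lt_min => /andP[/andP[hc1 hc2] hc3].
have nc : b - `|c - d| <= `|c|.
  have := lerB_dist d c; rewrite (distrC d c) -/b => h; lra.
have ncb : `| `|c| - b| < dp by apply: le_lt_trans (ler_dist_dist _ _) hc3.
have c0 : 0 < `|c| by lra.
set pc := phi `|c|; have pc0 : 0 < pc by apply: (phi_gt0 hg).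
have := Hp _ (normr_ge0 c) ncb; rewrite -/pc lt_min => /andP[hp1 hp2].
set f := fun y => pc^-1 * J c y.
have fd : dual_elem f by apply/dual_scale/(Jdual hJ).
have fn : dnorm f = 1 by apply: dnorm_normalize; rewrite -normr_gt0.
have key : dnorm (fun y => f y - f0 y) < eps0.
  rewrite ltNge; apply/negP => hge.
  have := Hl f fd fn hge.
  have := dnorm_ub d (dual_add fd f0d); rewrite f0dd -/b.
  have hfd : `|c| - `|c - d| <= f d.
    rewrite /f ler_pdivlMl //.
    have -> : J c d = J c c + J c (d - c).
      rewrite -(dualD _ _ (Jdual hJ c)); congr (J c _); by rewrite addrC subrK.
    rewrite (Jxx hJ) -/pc.
    have := Jbound hJ c (d - c); rewrite -/pc (distrC d c) ler_norml => /andP[h1 _].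
    rewrite mulrBr; lra.
  move=> h1 h2.
  have h3 := ler_norm (f d + b).
  have h4 : dnorm (fun y => f y + f0 y) * b <= 2 * (1 - del') * b by rewrite ler_pM2r.
  have h5 : 2 * (1 - del') * b = 2 * b - 2 * (del' * b) by ring.
  lra.
have fsub := dual_sub fd f0d.
have Dge0 := dnorm_ge0 fsub.
apply: le_lt_trans (_ : pc * dnorm (fun y => f y - f0 y) + `|pc - pd| < e).
  apply: dnorm_le.
  - exact: dual_sub (Jdual hJ c) (Jdual hJ d).
  - by rewrite addr_ge0 // mulr_ge0 // ltW.
  move=> y.
  have E : J c y - J d y = pc * (f y - f0 y) + (pc - pd) * f0 y.
    by rewrite /f /f0; field; rewrite !gt_eqF.
  rewrite E; apply: le_trans (ler_normD _ _) _.
  rewrite [X in _ <= X]mulrDl; apply: lerD.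
    by rewrite normrM (gtr0_norm pc0) -mulrA ler_pM2l //; exact: (dnorm_ub y fsub).
  rewrite normrM ler_wpM2l //.
  by have := dnorm_ub y f0d; rewrite f0n mul1r.
set D := dnorm _ in Dge0 key *.
set q := e / (4 * pd) in eps0e.
have q0 : 0 < q by rewrite divr_gt0 // mulr_gt0.
have pq : pd * q = e / 4 by rewrite /q; field; rewrite gt_eqF.
have hpc : pc < 2 * pd.
  move: hp2; rewrite ltr_norml => /andP[_ h]; rewrite -/pd in h; lra.
have : pc * D <= pc * q by rewrite ler_pM2l //; lra.
have : pc * q < 2 * pd * q by rewrite ltr_pM2r.
lra.
Qed.

End JCont.

Section LUC.
Context {R : realType} {X : normedModType R} (phi : R -> R) (J : X -> X -> R).
Hypothesis hg : gauge phi.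
Hypothesis hJ : forall x : X, duality_value phi x (J x).

Lemma unit_normalize (a : X) : 0 < `|a| -> `| `|a|^-1 *: a| = 1.
Proof. by move=> a0; rewrite normrZ gtr0_norm ?invr_gt0 // mulVf ?gt_eqF. Qed.

Lemma scale_normalize (a : X) : 0 < `|a| -> `|a| *: (`|a|^-1 *: a) = a.
Proof. by move=> a0; rewrite scalerA mulfV ?gt_eqF ?scale1r. Qed.

Lemma lucS (hl : loc_unif_convex (R:=R) (X:=X)) b e : 0 < e -> b != 0 ->
  exists2 eta, 0 < eta & forall a, `| `|a| - `|b| | < eta ->
    phi `|b| * `|b| - eta < J b a -> `|a - b| < e.
Proof.
move=> e0 bn0.
set B := `|b|; have B0 : 0 < B by rewrite normr_gt0.
set pb := phi B; have pb0 : 0 < pb by apply: (phi_gt0 hg).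
set x0 := B^-1 *: b.
have x01 : `|x0| = 1 by apply: unit_normalize.
set eps := Num.min (e / (2 * B)) 2.
have eps0 : 0 < eps by rewrite lt_min divr_gt0 ?mulr_gt0 //=.
have eps2 : eps <= 2 by rewrite ge_min lexx orbT.
have epse : eps <= e / (2 * B) by rewrite ge_min lexx.
have [del del0 H] := hl x0 x01 eps (introT andP (conj eps0 eps2)).
have F : forall x, `|x| = 1 -> eps <= `|x - x0| -> J b x <= pb * (1 - 2 * del).
  move=> x x1 hx; have := H x x1 hx => h.
  have := Jbound hJ b (x + x0); rewrite -/B -/pb.
  rewrite (dualD _ _ (Jdual hJ b)) /x0 (dualZ _ _ (Jdual hJ b)) (Jxx hJ) -/B -/pb.
  have -> : B^-1 * (pb * B) = pb by field; rewrite gt_eqF.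
  rewrite ler_norml => /andP[_ h2].
  have : pb * `|x + x0| <= pb * (2 * (1 - del)) by rewrite ler_pM2l.
  lra.
set eta := Num.min (Num.min (e / 2) (B / 2)) (Num.min (del * B * pb / (1 + pb)) (B * pb / 2)).
exists eta.
  rewrite !lt_min !divr_gt0 ?mulr_gt0 ?addr_gt0 //.
have eta1 : eta <= e / 2 by rewrite /eta !ge_min lexx.
have eta2 : eta <= B / 2 by rewrite /eta !ge_min lexx !orbT.
have eta3 : eta <= del * B * pb / (1 + pb) by rewrite /eta !ge_min lexx !orbT.
have eta4 : eta <= B * pb / 2 by rewrite /eta !ge_min lexx !orbT.
have eta0 : 0 < eta by rewrite !lt_min !divr_gt0 ?mulr_gt0 ?addr_gt0.
have eta3' : eta * (1 + pb) <= del * B * pb by rewrite -ler_pdivlMr // addr_gt0.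
move=> a ha hJa.
set A := `|a| in ha.
have hA : B - eta < A < B + eta by rewrite -ltr_distlC distrC.
move/andP: hA => [hA1 hA2].
have A0 : 0 < A by lra.
set x := A^-1 *: a.
have x1 : `|x| = 1 by apply: unit_normalize.
have ea : a = A *: x by rewrite /x scale_normalize.
have eb : b = B *: x0 by rewrite /x0 scale_normalize.
have hxx : `|x - x0| < eps.
  rewrite ltNge; apply/negP => hge.
  have ht := F x x1 hge.
  move: hJa; rewrite ea (dualZ _ _ (Jdual hJ b)) -/B -/pb => hJa.
  set t := J b x in ht hJa.
  have [t0|t0] := ltP t 0.
    have : A * t < 0 by rewrite pmulr_rlt0.
    lra.
  have h1 : A * t <= (B + eta) * t by rewrite ler_wpM2r // ltW.
  have h2 : (B + eta) * t <= (B + eta) * (pb * (1 - 2 * del)) by rewrite ler_wpM2l // addr_ge0 // ltW.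
  have h3 : 0 <= eta * pb * del by rewrite !mulr_ge0 // ltW.
  nra.
have -> : a - b = (A - B) *: x + B *: (x - x0).
  rewrite {1}ea {1}eb scalerBl scalerBr addrA subrK //.
have h1 : B * `|x - x0| < B * (e / (2 * B)) by rewrite ltr_pM2l //; lra.
have h1' : B * (e / (2 * B)) = e / 2 by field; rewrite gt_eqF.
have h2 : `|A - B| + B * `|x - x0| < e by lra.
apply: le_lt_trans (ler_normD _ _) _.
rewrite normrZ x1 mulr1 normrZ (gtr0_norm B0); exact: h2.
Qed.

End LUC.

Section Gap.
Context {R : realType} (phi : R -> R) (hg : gauge phi).

Lemma frac_bound (t u p : R) : 0 <= t -> 0 <= p -> 0 < u -> t < u / (p + 1) -> t * p <= u.
Proof.
move=> t0 p0 u0; rewrite ltr_pdivlMr ?ltr_wpDl // => h.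
have : t * p <= t * (p + 1) by rewrite ler_wpM2l // lerDl.
lra.
Qed.

Lemma frac_bound_le (t u p : R) : 0 <= t -> 0 <= p -> 0 < u -> t <= u / (p + 1) -> t * p <= u /\ t <= u.
Proof.
move=> t0 p0 u0; rewrite ler_pdivlMr ?ltr_wpDl // => h.
have : t * p <= t * (p + 1) by rewrite ler_wpM2l // lerDl.
have : t <= t * (p + 1) by rewrite ler_peMr // lerDr.
split; lra.
Qed.

Lemma gap B eta : 0 <= B -> 0 < eta -> exists2 k, 0 < k &
  forall A, 0 <= A -> eta <= `|A - B| -> k * `|A - B| <= (phi A - phi B) * (A - B).
Proof.
move=> B0 eta0.
have k10 : 0 < phi (B + eta) - phi B by rewrite subr_gt0; apply: (phi_lt hg) => //; lra.
have up : forall k, k <= phi (B + eta) - phi B -> forall A, eta <= A - B ->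
    k * `|A - B| <= (phi A - phi B) * (A - B).
  move=> k hk A hA; rewrite ger0_norm; last lra.
  have : phi (B + eta) <= phi A by apply: (phi_le hg); lra.
  move=> h; rewrite ler_pM2r; lra.
have [hB|hB] := leP eta B.
  have k20 : 0 < phi B - phi (B - eta) by rewrite subr_gt0; apply: (phi_lt hg); lra.
  exists (Num.min (phi (B + eta) - phi B) (phi B - phi (B - eta))).
    by rewrite lt_min k10 k20.
  move=> A A0 hA.
  have [AB|AB] := leP B A.
    apply: up; first by rewrite ge_min lexx.
    by move: hA; rewrite ger0_norm; lra.
  move: hA; rewrite ltr0_norm; last lra.
  move=> hA.
  have : phi A <= phi (B - eta) by apply: (phi_le hg); lra.
  have : Num.min (phi (B + eta) - phi B) (phi B - phi (B - eta)) <= phi B - phi (B - eta).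
    by rewrite ge_min lexx orbT.
  set k := Num.min _ _ => h1 h2.
  have -> : (phi A - phi B) * (A - B) = (phi B - phi A) * (- (A - B)) by ring.
  rewrite ler_pM2r; lra.
exists (phi (B + eta) - phi B) => // A A0 hA.
apply: up => //.
move: hA; have [AB|AB] := leP B A; first by rewrite ger0_norm; lra.
rewrite ltr0_norm; lra.
Qed.

End Gap.

Section Resolvent.
Context {R : realType} {X : normedModType R} (phi : R -> R) (J : X -> X -> R).
Context (A : X -> set (X -> R)) (Jres : R -> X -> X).
Hypothesis hg : gauge phi.
Hypothesis hJ : forall x : X, duality_value phi x (J x).
Hypothesis hmono : forall x y u v, A x u -> A y v -> 0 <= u (x - y) - v (x - y).
Hypothesis hres : forall (l : R) (x : X), 0 < l ->
     domain A (Jres l x) /\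
     exists u, A (Jres l x) u /\ forall y : X, J (Jres l x - x) y + l * u y = 0.

Lemma key_ineq l m x y : 0 < l -> 0 < m ->
  m * (J (Jres l x - x) (Jres l x - x) - J (Jres l x - x) (Jres m y - y)
        + J (Jres l x - x) (x - y))
  <= l * (J (Jres m y - y) (Jres l x - x) - J (Jres m y - y) (Jres m y - y)
        + J (Jres m y - y) (x - y)).
Proof.
move=> l0 m0.
have [_ [u [Au hu]]] := hres x l0.
have [_ [v [Av hv]]] := hres y m0.
have mono := hmono Au Av.
set xl := Jres l x in Au hu mono *; set yl := Jres m y in Av hv mono *.
set a := xl - x in hu *; set b := yl - y in hv *.
have h1 := hu (xl - yl); have h2 := hv (xl - yl).
have h3 := mulr_ge0 (ltW (mulr_gt0 l0 m0)) mono.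
have e1 : l * m * (u (xl - yl) - v (xl - yl)) = m * (l * u (xl - yl)) - l * (m * v (xl - yl)) by ring.
rewrite e1 in h3.
have ea : J a (xl - yl) = J a a - J a b + J a (x - y).
  by rewrite /a /b !(dualB _ _ (Jdual hJ (xl - x))); ring.
have eb : J b (xl - yl) = J b a - J b b + J b (x - y).
  by rewrite /a /b !(dualB _ _ (Jdual hJ (yl - y))); ring.
rewrite -ea -eb; nra.
Qed.

End Resolvent.

Lemma arith_E2 (R : realFieldType) (m l pA pB A B s jab jba jaxy jbxy P1 eta2 u t : R) :
  m * (pA * A - jab + jaxy) <= l * (jba - pB * B + jbxy) ->
  m * jab <= m * (pA * B) ->
  m * (- (pA * s)) <= m * jaxy ->
  l * jbxy <= l * (pB * s) ->
  0 <= m * ((pA - pB) * (A - B)) ->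
  (l - m) * pB * (A - B) <= u * pB * t ->
  u * pB * t <= u * pB ->
  u * pB <= m * eta2 / 8 ->
  l * pB * s <= 3 * m / 2 * pB * s ->
  m * (pA * s) <= m * (P1 * s) ->
  m * (s * (P1 + 2 * pB)) <= m * (eta2 / 8) ->
  0 <= m * pB * s ->
  l * (pB * A - jba) <= m * eta2 / 4.
Proof. move=> *; lra. Qed.

Lemma arith_HE (R : realFieldType) (m l E2 eta2 : R) :
  l * E2 <= m * eta2 / 4 -> (l - m / 2) * E2 >= 0 -> m * E2 <= m * (eta2 / 2).
Proof. move=> *; lra. Qed.

Lemma arith_F1 (R : realFieldType) (t eta1 eta : R) :
  t < eta1 -> eta1 <= eta / 2 -> 0 < eta -> t < eta.
Proof. move=> *; lra. Qed.

Lemma arith_F2 (R : realFieldType) (pB A B jba eta eta1 : R) :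
  pB * A - jba <= eta / 2 / 2 -> pB * (A - B + eta1) >= 0 -> eta1 * pB <= eta / 2 ->
  0 < eta -> pB * B - eta < jba.
Proof. move=> *; lra. Qed.

Lemma arith_L1 (R : realFieldType) (m l : R) : - (m / 2) < l - m -> l - m < m / 2 ->
  m / 2 < l /\ l < 3 * m / 2.
Proof. move=> *; split; lra. Qed.
Lemma arith_h2 (R : realFieldType) (s e1 t : R) : s < e1 / 2 -> e1 <= t -> s <= t / 2.
Proof. move=> *; lra. Qed.
Lemma arith_Hb (R : realFieldType) (p t s : R) : 0 <= p * (t / 2 - s) -> p * s <= p * t / 2.
Proof. move=> *; lra. Qed.
Lemma arith_le1 (R : realFieldType) (a b e : R) : a - b < e -> e <= 1 -> a <= b + 1.
Proof. move=> *; lra. Qed.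
Lemma arith_ge0 (R : realFieldType) (t e : R) : - e < t -> 0 <= t + e.
Proof. move=> *; lra. Qed.
Lemma arith_claim1 (R : realFieldType) (m l k pA pB A B s jab jba jaxy jbxy u t e1 : R) :
  m * (pA * A - jab + jaxy) <= l * (jba - pB * B + jbxy) ->
  m * jab <= m * (pA * B) ->
  l * jba <= l * (pB * A) ->
  m * (- (pA * s)) <= m * jaxy ->
  l * jbxy <= l * (pB * s) ->
  m * (k * t) <= m * ((pA - pB) * (A - B)) ->
  m * ((pA - pB) * s) <= m * ((pA - pB) * (A - B) / 2) ->
  (l - m) * pB * (A - B) <= u * pB * t ->
  u * pB * t <= m * k / 8 * t ->
  l * pB * s <= 3 * m / 2 * pB * s ->
  m * (s * pB) <= m * (k * e1 / 24) ->
  m * k * e1 <= m * k * t ->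
  0 < m * k * t -> 0 < m -> False.
Proof. move=> *; lra. Qed.

Section ResCont.
Context {R : realType} {X : normedModType R} (phi : R -> R) (J : X -> X -> R).
Context (A : X -> set (X -> R)) (Jres : R -> X -> X).
Hypothesis hg : gauge phi.
Hypothesis hJ : forall x : X, duality_value phi x (J x).
Hypothesis hmono : forall x y u v, A x u -> A y v -> 0 <= u (x - y) - v (x - y).
Hypothesis hres : forall (l : R) (x : X), 0 < l ->
     domain A (Jres l x) /\
     exists u, A (Jres l x) u /\ forall y : X, J (Jres l x - x) y + l * u y = 0.
Hypothesis hl : loc_unif_convex (R:=R) (X:=X).

Lemma res_cont m y e : 0 < m -> 0 < e ->
  exists2 del, 0 < del & forall l x, 0 < l -> `|l - m| < del -> `|x - y| < del ->
    `|(Jres l x - x) - (Jres m y - y)| < e.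
Proof.
move=> m0 e0.
set b := Jres m y - y; set B := `|b|; set pB := phi B.
have B0 : 0 <= B by apply: normr_ge0.
have pB0 : 0 <= pB by apply: (phi_ge0 hg).
have [eta eta0 HS] : exists2 eta, 0 < eta & forall a, `| `|a| - B| < eta ->
    pB * B - eta < J b a -> `|a - b| < e.
  have [b0|bn0] := eqVneq b 0.
    exists e => // a ha _; rewrite b0 subr0.
    by move: ha; rewrite /B b0 normr0 subr0 normr_id.
  exact: (lucS hg hJ hl e0 bn0).
set eta1 := Num.min (eta / 2 / (pB + 1)) 1.
have pos1 : 0 < pB + 1 by lra.
have eta10 : 0 < eta1 by rewrite lt_min !divr_gt0 //=.
have eta11 : eta1 <= 1 by rewrite ge_min lexx orbT.
have [eta1a eta1b] : eta1 * pB <= eta / 2 /\ eta1 <= eta / 2.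
  by apply: frac_bound_le => //; [exact: ltW | rewrite divr_gt0 | rewrite ge_min lexx].
set eta2 := eta / 2.
have eta20 : 0 < eta2 by rewrite divr_gt0.
have [k k0 Hk] := gap hg B0 eta10.
set P1 := phi (B + 1).
have P10 : 0 <= P1 by apply: (phi_ge0 hg); lra.
set d1 := m / 2.
set d2 := m * k / 8 / (pB + 1).
set d3 := k * eta1 / 24 / (pB + 1).
set d4 := eta1 / 2.
set d5 := eta2 / 8 / (P1 + 2 * pB + 1).
set d6 := m * eta2 / 8 / (pB + 1).
have pos2 : 0 < P1 + 2 * pB + 1 by lra.
exists (Num.min d1 (Num.min d2 (Num.min d3 (Num.min d4 (Num.min d5 d6))))).
  by rewrite !lt_min !divr_gt0 ?mulr_gt0.
move=> l x l0; rewrite !lt_min => /and5P[hl1 hl2 hl3 hl4 /andP[hl5 hl6]].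
move=> /and5P[hs1 hs2 hs3 hs4 /andP[hs5 hs6]].
set s := `|x - y| in hs1 hs2 hs3 hs4 hs5 hs6.
have s0 : 0 <= s by apply: normr_ge0.
have [L1a L1b] : m / 2 < l /\ l < 3 * m / 2.
  by move: hl1; rewrite ltr_norml /d1 => /andP[h1 h2]; apply: arith_L1.
have L2 : `|l - m| * pB <= m * k / 8.
  by apply: frac_bound => //; rewrite ?mulr_gt0 ?divr_gt0.
have S3 : s * pB <= k * eta1 / 24.
  by apply: frac_bound => //; rewrite ?mulr_gt0 ?divr_gt0.
have S5 : s * (P1 + 2 * pB) <= eta2 / 8.
  by apply: frac_bound => //; rewrite ?divr_gt0 // addr_ge0 // mulr_ge0.
have L6 : `|l - m| * pB <= m * eta2 / 8.
  by apply: frac_bound => //; rewrite ?mulr_gt0 ?divr_gt0.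
set a := Jres l x - x.
set Aa := `|a|; set pA := phi Aa.
have A0 : 0 <= Aa by apply: normr_ge0.
have pA0 : 0 <= pA by apply: (phi_ge0 hg).
have K := key_ineq hJ hmono hres x y l0 m0.
rewrite -/a -/b in K.
rewrite (Jxx hJ a) (Jxx hJ b) -/Aa -/B -/pA -/pB in K.
have := Jbound hJ a b; rewrite -/Aa -/B -/pA ler_norml => /andP[_ Jab].
have := Jbound hJ b a; rewrite -/Aa -/B -/pB ler_norml => /andP[_ Jba].
have := Jbound hJ a (x - y); rewrite -/Aa -/s -/pA ler_norml => /andP[Jaxy _].
have := Jbound hJ b (x - y); rewrite -/s -/B -/pB ler_norml => /andP[_ Jbxy].
set jab := J a b in K Jab; set jba := J b a in K Jba.
set jaxy := J a (x - y) in K Jaxy; set jbxy := J b (x - y) in K Jbxy.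
have G0 : 0 <= (pA - pB) * (Aa - B).
  have [AB|AB] := leP Aa B.
    have : pA <= pB by apply: (phi_le hg).
    by move=> h; rewrite mulr_le0 // subr_le0.
  have : pB <= pA by apply: (phi_le hg) => //; exact: ltW.
  by move=> h; rewrite mulr_ge0 // subr_ge0 // ltW.
have mJab : m * jab <= m * (pA * B) by rewrite ler_wpM2l // ltW.
have lJba : l * jba <= l * (pB * Aa) by rewrite ler_wpM2l // ltW.
have mJaxy : m * (- (pA * s)) <= m * jaxy by rewrite ler_wpM2l // ltW.
have lJbxy : l * jbxy <= l * (pB * s) by rewrite ler_wpM2l // ltW.
have mG0 : 0 <= m * ((pA - pB) * (Aa - B)) by rewrite mulr_ge0 // ltW.
have Hc : (l - m) * pB * (Aa - B) <= `|l - m| * pB * `|Aa - B|.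
  rewrite -mulrA -[X in _ <= X]mulrA [pB * _]mulrC [pB * `|_|]mulrC !mulrA ler_wpM2r //.
  by rewrite -normrM ler_norm.
have Hd : l * pB * s <= 3 * m / 2 * pB * s by rewrite ler_wpM2r // ler_wpM2r // ltW.
have claim1 : `|Aa - B| < eta1.
  rewrite ltNge; apply/negP => hge.
  have Ha := Hk _ A0 hge.
  have Ha' : m * (k * `|Aa - B|) <= m * ((pA - pB) * (Aa - B)) by rewrite ler_wpM2l // ltW.
  have Hb : (pA - pB) * s <= (pA - pB) * (Aa - B) / 2.
    have [AB|AB] := leP Aa B.
      have : pA <= pB by apply: (phi_le hg).
      move=> h; apply: (@le_trans _ _ 0).
        by rewrite mulr_le0_ge0 // subr_le0.
      by rewrite divr_ge0 // mulr_le0 // subr_le0.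
    have : pB <= pA by apply: (phi_le hg) => //; exact: ltW.
    move: hge; rewrite ger0_norm; last by rewrite subr_ge0 ltW.
    move=> hge h; have h2 : s <= (Aa - B) / 2.
      by move: hs4; rewrite /d4 => h4; apply: arith_h2 h4 hge.
    have : 0 <= (pA - pB) * ((Aa - B) / 2 - s) by rewrite mulr_ge0 // subr_ge0.
    exact: arith_Hb.
  have Hb' : m * ((pA - pB) * s) <= m * ((pA - pB) * (Aa - B) / 2) by rewrite ler_wpM2l // ltW.
  have Hc' : `|l - m| * pB * `|Aa - B| <= m * k / 8 * `|Aa - B| by rewrite ler_wpM2r.
  have He : m * (s * pB) <= m * (k * eta1 / 24) by rewrite ler_wpM2l // ltW.
  have Hf : m * k * eta1 <= m * k * `|Aa - B| by rewrite ler_wpM2l // mulr_ge0 // ltW.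
  have Hpos : 0 < m * k * `|Aa - B| by rewrite !mulr_gt0 //; exact: lt_le_trans eta10 hge.
  exact: (arith_claim1 K mJab lJba mJaxy lJbxy Ha' Hb' Hc Hc' Hd He Hf Hpos m0).
have [cA1 cA2] : - eta1 < Aa - B /\ Aa - B < eta1 by move: claim1; rewrite ltr_norml => /andP[].
have Hc2 : `|l - m| * pB * `|Aa - B| <= `|l - m| * pB.
  by rewrite -[leRHS]mulr1 ler_wpM2l ?mulr_ge0 //; apply: ltW; apply: lt_le_trans claim1 eta11.
have pAP1 : pA <= P1 by apply: (phi_le hg) => //; exact: arith_le1 cA2 eta11.
have Hj : m * (pA * s) <= m * (P1 * s) by rewrite ler_wpM2l ?ler_wpM2r // ltW.
have Hk' : m * (s * (P1 + 2 * pB)) <= m * (eta2 / 8) by rewrite ler_wpM2l // ltW.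
have mps : 0 <= m * pB * s by rewrite !mulr_ge0 // ltW.
set E2 := pB * Aa - jba.
have E20 : 0 <= E2 by rewrite /E2 subr_ge0.
have lE2 : l * E2 <= m * eta2 / 4.
  rewrite /E2; apply: (arith_E2 K mJab mJaxy lJbxy mG0 Hc Hc2 L6 Hd Hj Hk' mps).
have hE : (l - m / 2) * E2 >= 0 by rewrite mulr_ge0 // subr_ge0 ltW.
have HE : m * E2 <= m * (eta2 / 2) by apply: (arith_HE lE2 hE).
rewrite ler_pM2l // in HE.
have pBA : pB * (Aa - B + eta1) >= 0 by rewrite mulr_ge0 //; exact: arith_ge0 cA1.
apply: HS.
  rewrite -/Aa; apply: (arith_F1 claim1 eta1b eta0).
rewrite -/jba; apply: (arith_F2 HE pBA eta1a); done.
Qed.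

End ResCont.

Lemma zm (V : zmodType) (p q x y : V) : p - q = (p - x - (q - y)) + (x - y).
Proof. by rewrite opprB addrAC subrKA subrKA. Qed.
Lemma zn (V : zmodType) (p q x y : V) : (x - p) - (y - q) = - ((p - x) - (q - y)).
Proof. by rewrite [RHS]opprD opprK !opprB. Qed.

Lemma arith_yos (R : realType) (l l0 D P e : R) : 0 < l0 -> 0 < e -> 0 <= D -> 0 <= P ->
  l0 / 2 < l -> D < l0 * e / 4 -> `|l - l0| < l0 * l0 * e / 4 / (P + 1) ->
  l^-1 * D + `|l^-1 - l0^-1| * P < e.
Proof.
move=> l00 e0 D0 P0 hl hD hd.
have l0' : 0 < l by apply: lt_trans hl; rewrite divr_gt0.
have h1 : l^-1 * D < e / 2.
  rewrite mulrC ltr_pdivrMr //.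
  have : e / 2 * (l0 / 2) < e / 2 * l by rewrite ltr_pM2l // divr_gt0.
  have : e / 2 * (l0 / 2) = l0 * e / 4 by field.
  lra.
have h2 : `|l^-1 - l0^-1| * P < e / 2.
  have -> : l^-1 - l0^-1 = (l0 - l) / (l * l0) by field; rewrite !gt_eqF.
  rewrite normrM normfV (gtr0_norm (mulr_gt0 l0' l00)) distrC.
  rewrite mulrAC ltr_pdivrMr ?mulr_gt0 //.
  have hb : `|l - l0| * P <= l0 * l0 * e / 4.
    by apply: frac_bound => //; rewrite ?mulr_gt0 ?divr_gt0.
  have : e / 2 * (l * l0) > e / 2 * (l0 / 2 * l0) by rewrite ltr_pM2l ?divr_gt0 // ltr_pM2r.
  have : e / 2 * (l0 / 2 * l0) = l0 * l0 * e / 4 by field.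
  lra.
lra.
Qed.

Unset Implicit Arguments. Set Strict Implicit.

Theorem theorem3 (R : realType) (X : completeNormedModType R)
  (A : X -> set (X -> R)) (phi : R -> R)
  (J : X -> (X -> R)) (Jres : R -> X -> X) :
  @reflexive_space R X ->
  @loc_unif_convex R X ->
  @dual_loc_unif_convex R X ->
  maximal_monotone A ->
  gauge phi ->
  (* J is the duality mapping J_phi *)
  (forall x : X, duality_value phi x (J x)) ->
  (* Jres l x is the solution x_l of 0 \in J_phi(x_l - x) + l A x_l *)
  (forall (l : R) (x : X), 0 < l ->
     domain A (Jres l x) /\
     exists u, A (Jres l x) u /\ forall y : X, J (Jres l x - x) y + l * u y = 0) ->
  (* continuity of (l, x) |-> A^phi_l x into X^* *)
  (forall (l0 : R) (x0 : X), 0 < l0 -> forall e : R, 0 < e ->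
     exists2 d : R, 0 < d & forall (l : R) (x : X), 0 < l ->
       `|l - l0| < d -> `|x - x0| < d ->
       dnorm (fun y => yosida J Jres l x y - yosida J Jres l0 x0 y) < e) /\
  (* continuity of (l, x) |-> J^phi_l x into X *)
  (forall (l0 : R) (x0 : X), 0 < l0 -> forall e : R, 0 < e ->
     exists2 d : R, 0 < d & forall (l : R) (x : X), 0 < l ->
       `|l - l0| < d -> `|x - x0| < d ->
       `|Jres l x - Jres l0 x0| < e).
Proof.
move=> _ hl hd hmax hg hJ hres.
have hmono : forall x y u v, A x u -> A y v -> 0 <= u (x - y) - v (x - y) := hmax.1.2.
split.
  move=> l0 x0 l00 e e0.
  set b' := x0 - Jres l0 x0.
  set P := phi `|b'|.
  have P0 : 0 <= P by apply: (phi_ge0 hg).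
  have e1 : 0 < l0 * e / 4 by rewrite divr_gt0 ?mulr_gt0.
  have [dJ dJ0 HJ] := Jcont hg hJ hd b' e1.
  have [dR dR0 HR] := res_cont hg hJ hmono hres hl x0 l00 dJ0.
  exists (Num.min (Num.min dR (l0 / 2)) (l0 * l0 * e / 4 / (P + 1))).
    by rewrite !lt_min dR0 !divr_gt0 ?mulr_gt0 // ltr_wpDl.
  move=> l x l0' ; rewrite !lt_min => /andP[/andP[hl1 hl2] hl3] /andP[/andP[hx1 _] _].
  have hab := HR l x l0' hl1 hx1.
  set c := x - Jres l x.
  have hc : `|c - b'| < dJ by rewrite /c /b' zn normrN.
  have HD := HJ c hc.
  have hl4 : l0 / 2 < l by move: hl2; rewrite ltr_norml => /andP[h _]; lra.
  have fd : dual_elem (fun y => J c y - J b' y) by apply: dual_sub; apply: (Jdual hJ).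
  apply: le_lt_trans (_ : l^-1 * dnorm (fun y => J c y - J b' y) + `|l^-1 - l0^-1| * P < e);
    last by apply: arith_yos => //; exact: dnorm_ge0.
  apply: dnorm_le.
  - apply: dual_sub; apply: dual_scale; exact: (Jdual hJ).
  - by rewrite addr_ge0 ?mulr_ge0 ?invr_ge0 ?dnorm_ge0 // ltW.
  move=> y; rewrite /yosida -/c -/b'.
  have -> : l^-1 * J c y - l0^-1 * J b' y = l^-1 * (J c y - J b' y) + (l^-1 - l0^-1) * J b' y by ring.
  apply: le_trans (ler_normD _ _) _.
  rewrite [X in _ <= X]mulrDl; apply: lerD.
    rewrite normrM gtr0_norm ?invr_gt0 // -mulrA ler_pM2l ?invr_gt0 //.
    exact: (dnorm_ub y fd).
  rewrite normrM -mulrA ler_wpM2l //.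
  exact: (Jbound hJ).
move=> l0 x0 l00 e e0.
have e2 : 0 < e / 2 by rewrite divr_gt0.
have [dR dR0 HR] := res_cont hg hJ hmono hres hl x0 l00 e2.
exists (Num.min dR (e / 2)); first by rewrite lt_min dR0.
move=> l x l0'; rewrite !lt_min => /andP[hl1 _] /andP[hx1 hx2].
have hab := HR l x l0' hl1 hx1.
rewrite (zm _ _ x x0).
apply: le_lt_trans (ler_normD _ _) _.
have : `|Jres l x - x - (Jres l0 x0 - x0)| + `|x - x0| < e / 2 + e / 2 by rewrite ltrD.
by rewrite -splitr.
Qed.
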